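(* Let $\varphi=\frac{1+\sqrt5}{2}$ and $\bar\varphi=\frac{1-\sqrt5}{2}$. Consider the two systems of functional equations for a map $f:\mathsf P^1(\mathbb Z)\to\mathsf P^1(\mathbb C)$: (A) $f(1-1/x)=1-1/f(x)$ and $f(-1/x)=-f(x)$ for all $x\in\mathsf P^1(\mathbb Z)$; (B) $f(1-1/x)=1-1/f(x)$ and $f(-1/(1+x))=-1-1/f(x)$ for all $x\in\mathsf P^1(\mathbb Z)$. Each of (A) and (B) has exactly two solutions, namely one with $f(1)=\varphi^2=\frac{3+\sqrt5}{2}$ and one with $f(1)=\bar\varphi^2=\frac{3-\sqrt5}{2}$.
   Context: $\mathsf P^1(\mathbb Z)=\mathbb Q\cup\{\infty\}$, $\mathsf P^1(\mathbb C)=\mathbb C\cup\{\infty\}$, with Möbius transformations extended to $\infty$ in the usual way. Interpretation: with Dyer's outer automorphism $\alpha$ of $\mathsf{PGL}_2(\mathbb Z)$ (defined by $\alpha(U)=U$, $\alpha(K)=K$, $\alpha(V)=UV$ where $U(x)=1/x$, $K(x)=1-x$, $V(x)=-x$), system (A) says $f(gx)=\alpha(g)f(x)$ for all $g\in\mathsf{PSL}_2(\mathbb Z)$, and system (B) says the same for all $g$ in $\Gamma=\langle L,SLS\rangle$, where $L(x)=1-1/x$, $S(x)=-1/x$. *)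

(* Defs.v *)
(* P^1(Z) = option rat (None = oo), P^1(C) = option R[i]
   with R the Stdlib reals viewed as a realType (hence rcfType). *)
From HB Require Import structures.
From mathcomp Require Import all_boot all_order all_algebra.
From mathcomp Require Import complex.
From mathcomp Require Import Rstruct.
Set Implicit Arguments. Unset Strict Implicit. Unset Printing Implicit Defensive.
Import Order.TTheory GRing.Theory Num.Theory.
Local Open Scope ring_scope.

Definition P1 (F : Type) := option F.

Section P1ops.
Variable F : fieldType.
Definition p1inv (x : P1 F) : P1 F :=
  match x with
  | None => Some 0
  | Some a => if a == 0 then None else Some a^-1
  end.
Definition p1add (c : F) (x : P1 F) : P1 F := omap (fun a => c + a) x.
Definition p1opp (x : P1 F) : P1 F := omap (fun a => - a) x.
End P1ops.

Definition mobL (F : fieldType) (x : P1 F) : P1 F := p1add 1 (p1opp (p1inv x)).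
Definition mobS (F : fieldType) (x : P1 F) : P1 F := p1opp (p1inv x).
Definition mobT (F : fieldType) (x : P1 F) : P1 F := p1opp (p1inv (p1add 1 x)).
Definition mobV (F : fieldType) (x : P1 F) : P1 F := p1opp x.
Definition mobW (F : fieldType) (x : P1 F) : P1 F := p1add (-1) (p1opp (p1inv x)).

Definition Cx := (Rdefinitions.R)[i].

Definition systemA (f : P1 rat -> P1 Cx) : Prop :=
  (forall x, f (mobL x) = mobL (f x)) /\ (forall x, f (mobS x) = mobV (f x)).
Definition systemB (f : P1 rat -> P1 Cx) : Prop :=
  (forall x, f (mobL x) = mobL (f x)) /\ (forall x, f (mobT x) = mobW (f x)).

Definition phi2 : Cx := ((3 + Num.sqrt 5) / 2 : Rdefinitions.R)%:C%C.
Definition phibar2 : Cx := ((3 - Num.sqrt 5) / 2 : Rdefinitions.R)%:C%C.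

(* Main.v *)
Require Import Defs.
From Stdlib Require Import FunctionalExtensionality.
From HB Require Import structures.
From mathcomp Require Import all_boot all_order all_algebra.
From mathcomp Require Import complex.
From mathcomp Require Import Rstruct.
From mathcomp Require Import ring lra zify.
Set Implicit Arguments. Unset Strict Implicit. Unset Printing Implicit Defensive.
Import Order.TTheory GRing.Theory Num.Theory.
Local Open Scope ring_scope.
Ltac p1t := repeat (rewrite /= ?oppr0 ?addr0 ?eqxx ?invr_eq0 ?invrK ?opprK ?oppr_eq0; match goal with
  | |- context [if ?b then _ else _] => let h := fresh "h" in case: ifP => h; [move/eqP: h => h | move/negbT: h => h]
  end); rewrite /= ?oppr0 ?addr0 ?eqxx ?invr_eq0 ?invrK ?opprK ?oppr_eq0 /=.
Ltac nz1 := match goal with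
 | |- is_true (?e != 0) => first [ done | by rewrite ?oppr_eq0 ?oner_eq0 |
     (match goal with H : is_true (?f != 0) |- _ =>
        first [ rewrite (_ : e = f); [exact H | by ring] | rewrite (_ : e = - f); [by rewrite oppr_eq0 | by ring] ] end) ]
end.
Ltac nzf := repeat match goal with |- is_true (_ && _) => apply/andP; split end; nz1.
Ltac fld := congr Some; field; nzf.
Definition tau (F : fieldType) (y : P1 F) : P1 F := p1add 1 (p1inv y).
Definition taui (F : fieldType) (y : P1 F) : P1 F := p1inv (p1add (-1) y).
Section S. Variable F : fieldType.
Implicit Types a : F.
Lemma a1' a : -1 + a = 0 -> a = 1.
Proof. by move/eqP; rewrite addrC subr_eq0 => /eqP. Qed.
Lemma onef (h : (1:F) = 0) : False.
Proof. by move: (oner_neq0 F); rewrite h eqxx. Qed.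
Lemma b1 a : -1 - a = 0 -> a = -1.
Proof. by move/eqP; rewrite subr_eq0 => /eqP. Qed.
Lemma G5 (y : P1 F) : taui (p1opp (taui (p1opp y))) = p1opp (tau y).
Proof.
case: y => [a|]; rewrite /tau /taui; p1t.
all: try done.
- by move: h; rewrite h0 subr0 => /eqP; rewrite oppr_eq0 oner_eq0.
- by move/b1: h => ->; rewrite invrN1 subrr oppr0.
- have : (-1 - (-1 - a)^-1) * (-1 - a) = a by field.
  by rewrite h0 mul0r => /esym/eqP; rewrite (negPf h1).
- by move: h0; rewrite h1 subr0 invrN1 opprK addNr eqxx.
- by fld.
- by case: (onef h).
- by rewrite invrN1.
Qed.
Lemma G6 (y : P1 F) : mobL (p1opp y) = tau y.
Proof. case: y => [a|]; rewrite /mobL /tau; p1t; try done. by rewrite invrN opprK. Qed.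
Lemma G7 (y : P1 F) : mobW y = p1opp (tau y).
Proof. case: y => [a|]; rewrite /mobW /tau; p1t; try done. by rewrite opprD. Qed.
Lemma G8 (x : P1 F) : p1add 1 (p1add 1 x) = mobL (mobT x).
Proof. case: x => [a|]; rewrite /mobL /mobT; p1t; try done.
- by rewrite h addr0.
- by move/eqP: h0; rewrite invr_eq0 (negPf h).
- by fld.
Qed.
Lemma G9 (y : P1 F) : mobL (mobW y) = tau (tau y).
Proof.
case: y => [a|]; rewrite /mobL /mobW /tau; p1t; try done.
- by move: h1; rewrite -oppr_eq0 opprD h0 eqxx.
- by move: h0; rewrite -oppr_eq0 opprD !opprK h1 eqxx.
- have ha1 : 1 + a != 0.
    apply: contraNneq h1 => E; have ->: 1 + a^-1 = (1 + a) / a by field.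
    by rewrite E mul0r.
  by fld.
- by rewrite invrN1 invr1 opprK.
Qed.
Lemma oppK (y : P1 F) : p1opp (p1opp y) = y.
Proof. by case: y => //= a; rewrite opprK. Qed.
Lemma SK (x : P1 F) : mobS (mobS x) = x.
Proof. case: x => [a|]; rewrite /mobS; p1t; try done.
- by rewrite h.
- by move/eqP: h0; rewrite invr_eq0 (negPf h).
- by rewrite invrN invrK opprK.
Qed.
Lemma tauK (y : P1 F) : tau (taui y) = y.
Proof. case: y => [a|]; rewrite /tau /taui; p1t; try done.
- by rewrite (a1' h).
- by rewrite h0 eqxx in h.
- by rewrite addrA subrr add0r.
Qed.
Lemma tauiK (y : P1 F) : taui (tau y) = y.
Proof. case: y => [a|]; rewrite /tau /taui; p1t; try done.
- by rewrite h.
- by move/eqP: h0; rewrite addrA addNr add0r invr_eq0 (negPf h).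
- by rewrite addrA addNr add0r invrK.
- by move: h; rewrite addNr eqxx.
Qed.
Lemma e1 a : a != 0 -> 1 + a != 0 -> -1 - a^-1 != 0.
Proof. move=> h0 h; have -> : -1 - a^-1 = -(1 + a) / a by field. 
by rewrite mulf_neq0 ?oppr_eq0 ?invr_eq0. Qed.
Lemma a1 a : 1 + a = 0 -> a = -1.
Proof. by move/eqP; rewrite addrC addr_eq0 => /eqP. Qed.
Lemma G4 (x : P1 F) : mobS (p1add 1 x) = p1add (-1) (mobS (p1add (-1) (mobS x))).
Proof.
case: x => [a|]; rewrite /mobS; p1t.
all: try done.
- by move: h; rewrite h0 addr0 => /onef.
- by move/a1: h h1 => ->; rewrite invrN1 opprK addrC subrr eqxx.
- by rewrite h0 addr0 invr1.
- by move: (e1 h0 h); rewrite h1 eqxx.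
- by fld.
- by case: (onef h).
- by rewrite invrN1 opprK addrC subrr.
Qed.
End S.
Ltac dump := idtac "====="; try (match reverse goal with H : ?t |- _ => idtac H ":" t; fail end); match goal with |- ?g => idtac "GOAL" g end.
Definition tpow (n : int) (y : P1 Cx) : P1 Cx :=
  match n with Posz m => iter m (@tau _) y | Negz m => iter m.+1 (@taui _) y end.

Lemma tpowS n y : tpow (n + 1) y = tau (tpow n y).
Proof.
case: n => [m|[|m]].
- have -> : Posz m + 1 = Posz m.+1 by lia.
  by [].
- by rewrite /= tauK.
- have -> : Negz m.+1 + 1 = Negz m by rewrite !NegzE; lia.
  by rewrite /= tauK.
Qed.

Lemma den_div (n d : int) : 0 < d -> denq (n%:~R / d%:~R) <= d.
Proof.
move=> d0; have := fracqE (n, d); rewrite /= => <-.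
rewrite den_fracq /= (_ : d != 0); last by rewrite gt_eqF.
have h : (`|d| %/ gcdn `|n| `|d| <= `|d|)%N by apply: leq_div.
by rewrite -[X in _ <= X](gez0_abs (ltW d0)).
Qed.
Lemma ratE (x : rat) : x = (numq x)%:~R / (denq x)%:~R.
Proof. by rewrite divq_num_den. Qed.
Lemma denq_neq0' (x : rat) : ((denq x)%:~R : rat) != 0.
Proof. by rewrite intr_eq0 denq_neq0. Qed.

Lemma den_shift (x : rat) (m : int) : denq (x + m%:~R) <= denq x.
Proof.
have -> : x + m%:~R = (numq x + m * denq x)%:~R / (denq x)%:~R.
  rewrite {1}(ratE x) intrD intrM. have := denq_neq0' x. move=> h. field. done.
exact: den_div (denq_gt0 x).
Qed.

Lemma den_shift_eq (x : rat) (m : int) : denq (x + m%:~R) = denq x.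
Proof.
apply/eqP; rewrite eq_le den_shift /=.
have := den_shift (x + m%:~R) (- m). by rewrite intrN addrK.
Qed.

Lemma num_lt_den (r : rat) : r < 1 -> numq r < denq r.
Proof.
move=> h; have : (numq r)%:~R / (denq r)%:~R < (1 : rat) by rewrite -ratE.
by rewrite ltr_pdivrMr ?ltr0z ?denq_gt0 // mul1r ltr_int.
Qed.

Lemma den_inv (r : rat) : 0 < r -> r < 1 -> denq (- r^-1) < denq r.
Proof.
move=> h0 h1.
have n0 : 0 < numq r by rewrite numq_gt0.
have -> : - r^-1 = (- denq r)%:~R / (numq r)%:~R.
  have hn : ((numq r)%:~R : rat) != 0 by rewrite intr_eq0 gt_eqF.
  have := denq_neq0' r => hd.
  rewrite {1}(ratE r) intrN. field. by rewrite hn hd.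
apply: le_lt_trans (den_div _ n0) _; exact: num_lt_den.
Qed.
Fixpoint frec (c : Cx) (k : nat) (x : rat) : P1 Cx :=
  match k with
  | 0 => None
  | k'.+1 => tpow (Num.floor x)
      (if x - (Num.floor x)%:~R == 0 then Some (- c)
       else p1opp (frec c k' (- (x - (Num.floor x)%:~R)^-1)))
  end.

Lemma floor_r (x : rat) : 0 <= x - (Num.floor x)%:~R /\ x - (Num.floor x)%:~R < 1.
Proof.
split; first by rewrite subr_ge0 floor_le.
by rewrite ltrBlDl; have := floorD1_gt x; rewrite intrD.
Qed.

Lemma frec_ext c k k' x : denq x <= k%:Z -> denq x <= k'%:Z -> frec c k x = frec c k' x.
Proof.
elim: k k' x => [|k IH] [|k'] x /= h h'; try by (have := denq_gt0 x; lia).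
set r := x - _.
case: eqP => // /eqP rn0; congr (tpow _ (p1opp _)).
have [r0 r1] := floor_r x; rewrite -/r in r0 r1.
have rp : 0 < r by rewrite lt_neqAle eq_sym rn0.
have := den_inv rp r1; rewrite /r -intrN den_shift_eq -/r => hd.
apply: IH; lia.
Qed.

Definition Ff (c : Cx) (x : P1 rat) : P1 Cx :=
  match x with None => Some c | Some q => frec c `|denq q|%N q end.

Lemma Ff_eq c x : Ff c (Some x) = tpow (Num.floor x)
      (if x - (Num.floor x)%:~R == 0 then Some (- c)
       else p1opp (Ff c (Some (- (x - (Num.floor x)%:~R)^-1)))).
Proof.
rewrite /=; case: (denqP x) => d hd; rewrite hd /=.
set r := x - _.
case: eqP => // /eqP rn0; congr (tpow _ (p1opp _)).
have [r0 r1] := floor_r x; rewrite -/r in r0 r1.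
have rp : 0 < r by rewrite lt_neqAle eq_sym rn0.
have := den_inv rp r1; rewrite /r -intrN den_shift_eq -/r => hdi.
apply: frec_ext; rewrite ?absz_denq //; lia.
Qed.
Lemma addKp (x : P1 rat) : p1add 1 (p1add (-1) x) = x.
Proof. by case: x => //= a; rewrite addrA subrr add0r. Qed.

Section FRel.
Variable c : Cx.
Hypothesis hc : tau (Some c) = Some c.

Lemma FT x : Ff c (p1add 1 x) = tau (Ff c x).
Proof.
case: x => [x|]; last by rewrite /= hc.
change (Ff c (Some (1 + x)) = tau (Ff c (Some x))).
have hf : Num.floor (1 + x) = Num.floor x + 1.
  apply: floor_def; have /andP [h1 h2] := floor_itv x.
  rewrite intrD in h2; rewrite !intrD; apply/andP; split; lra.
have hr : 1 + x - (Num.floor (1 + x))%:~R = x - (Num.floor x)%:~R.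
  by rewrite hf intrD; ring.
by rewrite Ff_eq hr hf tpowS -Ff_eq.
Qed.

Lemma FTi x : Ff c (p1add (-1) x) = taui (Ff c x).
Proof. by rewrite -{2}(addKp x) FT tauiK. Qed.

Lemma Fbase r : 0 < r -> r < 1 -> Ff c (Some r) = p1opp (Ff c (Some (- r^-1))).
Proof.
move=> h0 h1; rewrite Ff_eq.
have -> : Num.floor r = 0 by apply: floor_def; rewrite ltW //= add0r.
by rewrite subr0 gt_eqF.
Qed.
Definition PS x := Ff c (mobS x) = p1opp (Ff c x).

Lemma PS_inv x : PS (mobS x) -> PS x.
Proof. by rewrite /PS SK => ->; rewrite oppK. Qed.

Lemma mobS_some (r : rat) : r != 0 -> mobS (Some r) = Some (- r^-1).
Proof. by move=> h; rewrite /mobS /= (negPf h). Qed.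

Lemma PS_None : PS None.
Proof.
by rewrite /PS /mobS /=.
Qed.

Lemma PS_base r : 0 < r -> r < 1 -> PS (Some r).
Proof.
move=> h0 h1; rewrite /PS mobS_some ?gt_eqF // (Fbase h0 h1) oppK //.
Qed.

Lemma PS_step y : PS y -> PS (p1add (-1) (mobS y)) -> PS (p1add 1 y).
Proof.
rewrite /PS => h1 h2.
by rewrite G4 FTi h2 FTi h1 G5 FT.
Qed.

Lemma PS_pos (n : nat) (x : rat) : 0 <= x <= n%:R -> PS (Some x).
Proof.
elim: n x => [|n IH] x.
  move=> hx; have -> : x = 0 by apply/eqP; rewrite eq_le andbC.
  by apply: PS_inv; apply: PS_None.
move=> /andP [h0 h1].
case: (eqVneq x 0) => [->|xn0].
  by apply: PS_inv; apply: PS_None.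
case: (ltP x 1) => hx1.
  by apply: PS_base => //; rewrite lt_neqAle eq_sym xn0.
have -> : Some x = p1add 1 (Some (x - 1)) by rewrite /= addrC subrK.
apply: PS_step.
  apply: IH; apply/andP; split; first by lra.
  by move: h1; rewrite -natr1 /=; lra.
case: (eqVneq (x - 1) 0) => [->|yn0].
  by apply: PS_None.
have yp : 0 < x - 1 by rewrite lt_neqAle eq_sym yn0 /=; lra.
rewrite mobS_some //=.
apply: PS_inv; rewrite mobS_some; last first.
  have : 0 < (x - 1)^-1 by rewrite invr_gt0.
  by move=> h; apply/eqP => e; lra.
set z := (x - 1)^-1.
have zp : 0 < z by rewrite invr_gt0.
have -> : - (-1 - z)^-1 = (1 + z)^-1 by rewrite -invrN opprB opprK addrC.
apply: PS_base; first by rewrite invr_gt0; lra.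
rewrite invf_lt1; lra.
Qed.

Lemma PS_all x : PS x.
Proof.
case: x => [x|]; last exact: PS_None.
case: (leP 0 x) => hx.
  apply: (@PS_pos (Num.bound x)); rewrite hx /=; apply: ltW; exact: archi_boundP.
apply: PS_inv; rewrite mobS_some ?lt_eqF //.
have hp : 0 <= - x^-1 by rewrite oppr_ge0 invr_le0 ltW.
apply: (@PS_pos (Num.bound (- x^-1))); rewrite hp /=; apply: ltW; exact: archi_boundP.
Qed.
End FRel.

Lemma FA c : tau (Some c) = Some c -> systemA (Ff c).
Proof.
move=> hc; split => x.
- by rewrite /mobL -/(mobS x) FT // PS_all // -G6 oppK.
- exact: PS_all.
Qed.

Lemma A_B f : systemA f -> systemB f.
Proof.
move=> [hL hS]; split => // x.
rewrite /mobT -/(mobS (p1add 1 x)) hS.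
have -> : p1add 1 x = mobL (mobS x) by rewrite /mobL -/(mobS (mobS x)) SK.
by rewrite hL hS G6 G7.
Qed.

Lemma B_T2 f : systemB f -> forall x, f (p1add 1 (p1add 1 x)) = tau (tau (f x)).
Proof. by move=> [hL hT] x; rewrite G8 hL hT G9. Qed.

Lemma zero_LL : Some (0 : rat) = mobL (mobL None).
Proof. by []. Qed.
Lemma m1_TT : Some (-1 : rat) = mobT (mobT None).
Proof. by []. Qed.

Lemma U f g : systemB f -> systemB g -> f None = g None -> f = g.
Proof.
move=> hf hg h0.
have [hfL hfT] := hf; have [hgL hgT] := hg.
have hf2 := B_T2 hf; have hg2 := B_T2 hg.
suff Q : forall n : nat, forall x : rat, denq x <= n%:Z -> f (Some x) = g (Some x).
  apply: functional_extensionality => -[x|] //.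
  apply: (Q `|denq x|%N); by rewrite absz_denq.
elim=> [|n IHn] x hx; first by (have := denq_gt0 x; lia).
suff H : forall m : nat, forall x, denq x <= n.+1%:Z ->
    -1 - 2 * m%:R <= x < 1 + 2 * m%:R -> f (Some x) = g (Some x).
  have hb := archi_boundP (normr_ge0 x).
  have h1 := ler_norm x; have h2 := ler_norm (- x); rewrite normrN in h2.
  apply: (H (Num.bound `|x|)) => //; apply/andP; split; lra.
elim=> [|m IHm] {hx} x hx.
  rewrite mulr0 addr0 subr0 => /andP [hl hr].
  case: (eqVneq x 0) => [->|xn0]; first by rewrite zero_LL hfL hfL hgL hgL h0.
  case: (eqVneq x (-1)) => [->|xn1]; first by rewrite m1_TT hfT hfT hgT hgT h0.
  have ex := ratE x.
  have dp := denq_gt0 x.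
  have dn0 : ((denq x)%:~R : rat) != 0 by rewrite intr_eq0 gt_eqF.
  case: (ltrP 0 x) => xpos.
    have np : 0 < numq x by rewrite numq_gt0.
    have nd : numq x < denq x by apply: num_lt_den.
    have dmn : 0 < denq x - numq x by lia.
    have dmn0 : ((denq x)%:~R - (numq x)%:~R : rat) != 0.
      by rewrite -intrB intr_eq0 gt_eqF.
    set z := (denq x)%:~R / (denq x - numq x)%:~R : rat.
    have zn0 : z != 0 by rewrite mulf_neq0 // invr_eq0 intrB.
    have ez : Some x = mobL (Some z).
      rewrite /mobL /= (negPf zn0) /=; congr Some.
      rewrite {1}ex /z intrB; field; by rewrite dn0 dmn0.
    have dz : denq z <= n%:Z.
      have := den_div (denq x) dmn; rewrite -/z; lia.
    by rewrite ez hfL hgL IHn.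
  have xneg : x < 0 by rewrite lt_neqAle xn0 xpos.
  have xm1 : -1 < x by rewrite lt_neqAle eq_sym xn1 hl.
  have nn : numq x < 0 by rewrite numq_lt0.
  have nd : - numq x < denq x.
    by have := num_lt_den (_ : - x < 1); rewrite numqN denqN; apply; lra.
  have dmn : 0 < - numq x by lia.
  have nn0 : ((numq x)%:~R : rat) != 0 by rewrite intr_eq0 lt_eqF.
  set z := (denq x + numq x)%:~R / (- numq x)%:~R : rat.
  have ez1 : 1 + z = (denq x)%:~R / (- numq x)%:~R.
    rewrite /z intrD intrN; field; by rewrite nn0.
  have z1 : 1 + z != 0 by rewrite ez1 mulf_neq0 // invr_eq0 intrN oppr_eq0.
  have ez : Some x = mobT (Some z).
    rewrite /mobT /= (negPf z1) /=; congr Some.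
    rewrite ez1 {1}ex intrN; field; by rewrite dn0 nn0.
  have dz : denq z <= n%:Z.
    have := den_div (denq x + numq x) dmn; rewrite -/z; lia.
  by rewrite ez hfT hgT IHn.
move=> /andP [hl hr].
have hm : m.+1%:R = m%:R + 1 :> rat by rewrite -natr1.
rewrite hm in hl hr. have m0 : 0 <= m%:R :> rat by apply: ler0n.
have e2 : (2%:~R : rat) = 2 by [].
have en2 : ((-2)%:~R : rat) = -2 by [].
case: (lerP (-1 - 2 * m%:R) x) => hl'.
  case: (ltrP x (1 + 2 * m%:R)) => hr'.
    by apply: IHm => //; rewrite hl' hr'.
  have e : Some x = p1add 1 (p1add 1 (Some (x + (-2)%:~R))).
    by rewrite /= en2; congr Some; ring.
  have hh : -1 - 2 * m%:R <= x + (-2)%:~R < 1 + 2 * m%:R.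
    rewrite en2; apply/andP; split; lra.
  by rewrite e hf2 hg2 IHm // den_shift_eq.
have e : Some (x + 2%:~R) = p1add 1 (p1add 1 (Some x)).
  by rewrite /= e2; congr Some; ring.
have hh : -1 - 2 * m%:R <= x + 2%:~R < 1 + 2 * m%:R.
  rewrite e2; apply/andP; split; lra.
have := IHm (x + 2%:~R); rewrite den_shift_eq e hf2 hg2 => /(_ hx hh).
by move=> /(congr1 (@taui _)); rewrite !tauiK => /(congr1 (@taui _)); rewrite !tauiK.
Qed.

Notation R := Rdefinitions.R.
Definition sq5 : R := Num.sqrt 5.
Definition phiR : R := (1 + sq5) / 2.
Definition psiR : R := (1 - sq5) / 2.

Lemma sq5_sq : sq5 ^+ 2 = 5.
Proof. by rewrite /sq5 sqr_sqrtr // ler0n. Qed.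
Lemma sq5_pos : 0 < sq5.
Proof. by rewrite /sq5 sqrtr_gt0 ltr0n. Qed.

Lemma phiR_nz : phiR != 0.
Proof. rewrite /phiR; have := sq5_pos; move=> h; apply/eqP; lra. Qed.
Lemma psiR_nz : psiR != 0.
Proof.
rewrite /psiR; have := sq5_sq; have := sq5_pos => h1 h2; apply/eqP => e.
have e1 : sq5 = 1 by lra.
by move: h2; rewrite e1 expr1n => /eqP; rewrite (eqr_nat R 1 5).
Qed.

Lemma phiR_fix : 1 + phiR^-1 = phiR.
Proof.
have h := phiR_nz; have h5 := sq5_sq.
apply: (mulfI h); rewrite mulrDr mulfV // mulr1 /phiR.
apply/eqP; rewrite -subr_eq0; apply/eqP.
rewrite (_ : _ - _ = - (sq5 ^+ 2 - 5) / 4); first by rewrite h5 subrr oppr0 mul0r.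
by field.
Qed.
Lemma psiR_fix : 1 + psiR^-1 = psiR.
Proof.
have h := psiR_nz; have h5 := sq5_sq.
apply: (mulfI h); rewrite mulrDr mulfV // mulr1 /psiR.
apply/eqP; rewrite -subr_eq0; apply/eqP.
rewrite (_ : _ - _ = - (sq5 ^+ 2 - 5) / 4); first by rewrite h5 subrr oppr0 mul0r.
by field.
Qed.

Lemma phiR_L : 1 - phiR^-1 = (3 - sq5) / 2.
Proof.
have h : phiR^-1 = phiR - 1 by have := phiR_fix; lra.
by rewrite h /phiR; field.
Qed.
Lemma psiR_L : 1 - psiR^-1 = (3 + sq5) / 2.
Proof.
have h : psiR^-1 = psiR - 1 by have := psiR_fix; lra.
by rewrite h /psiR; field.
Qed.
Lemma phipsi_sum : phiR + psiR = 1.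
Proof. by rewrite /phiR /psiR; field. Qed.
Lemma phipsi_prod : phiR * psiR = -1.
Proof.
have -> : phiR * psiR = (1 - sq5 ^+ 2) / 4 by rewrite /phiR /psiR; field.
by rewrite sq5_sq; field.
Qed.
Lemma phi2_neq : phi2 != phibar2.
Proof.
rewrite /phi2 /phibar2 -/sq5; apply/eqP => /complexI e.
have := sq5_pos; lra.
Qed.
Local Open Scope complex_scope.
Definition c1 : Cx := phiR%:C.
Definition c2 : Cx := psiR%:C.
Local Close Scope complex_scope.

Lemma c1_nz : c1 != 0. Proof. by rewrite /c1 fmorph_eq0 phiR_nz. Qed.
Lemma c2_nz : c2 != 0. Proof. by rewrite /c2 fmorph_eq0 psiR_nz. Qed.

Lemma tau_c1 : tau (Some c1) = Some c1.
Proof.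
rewrite /tau /= (negPf c1_nz) /=; congr Some.
by rewrite /c1 -[in RHS]phiR_fix rmorphD rmorph1 fmorphV.
Qed.
Lemma tau_c2 : tau (Some c2) = Some c2.
Proof.
rewrite /tau /= (negPf c2_nz) /=; congr Some.
by rewrite /c2 -[in RHS]psiR_fix rmorphD rmorph1 fmorphV.
Qed.
Lemma L_c1 : mobL (Some c1) = Some phibar2.
Proof.
rewrite /mobL /= (negPf c1_nz) /=; congr Some.
by rewrite /phibar2 -/sq5 -phiR_L rmorphB rmorph1 fmorphV.
Qed.
Lemma L_c2 : mobL (Some c2) = Some phi2.
Proof.
rewrite /mobL /= (negPf c2_nz) /=; congr Some.
by rewrite /phi2 -/sq5 -psiR_L rmorphB rmorph1 fmorphV.
Qed.

Lemma two_nz : (1 + 1 : Cx) != 0.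
Proof. by rewrite -(natrD _ 1 1) pnatr_eq0. Qed.

Lemma fixpts y : tau (tau y) = y -> y = Some c1 \/ y = Some c2.
Proof.
case: y => [a|]; rewrite /tau /=; last first.
  by rewrite addr0 oner_eq0 /=.
case: (eqVneq a 0) => [->|a0] /=.
  by rewrite addr0 => -[] /eqP; rewrite oner_eq0.
case: (eqVneq (1 + a^-1) 0) => [e|e1] /=.
  by [].
move=> -[ea].
have ha1 : 1 + a != 0.
  apply: contraNneq e1 => E; have ->: 1 + a^-1 = (1 + a) / a by field.
  by rewrite E mul0r.
have q : a ^+ 2 - a - 1 = 0.
  have : (1 + (1 + a^-1)^-1 - a) * (1 + a) = - (a ^+ 2 - a - 1) by field; nzf.
  by rewrite ea subrr mul0r => /esym/eqP; rewrite oppr_eq0 => /eqP.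
have : (a - c1) * (a - c2) = 0.
  rewrite -q (_ : (a - c1) * (a - c2) = a ^+ 2 - (c1 + c2) * a + c1 * c2); last by ring.
  rewrite /c1 /c2 -rmorphD -rmorphM phipsi_sum phipsi_prod rmorphN rmorph1; ring.
move/eqP; rewrite mulf_eq0 !subr_eq0 => /orP [] /eqP ->; by [left | right].
Qed.

Lemma B_one f : systemB f -> f (Some 1) = mobL (f None).
Proof. by move=> [hL _]; rewrite -hL. Qed.

Lemma B_inf f : systemB f -> f None = Some c1 \/ f None = Some c2.
Proof. by move=> hf; apply: fixpts; rewrite -(B_T2 hf None). Qed.

Theorem mainTheorem10 :
  forall sys : (P1 rat -> P1 Cx) -> Prop, (sys = systemA \/ sys = systemB) ->
    (forall f, sys f -> f (Some 1) = Some phi2 \/ f (Some 1) = Some phibar2) /\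
    (exists f, sys f /\ f (Some 1) = Some phi2 /\
       forall g, sys g -> g (Some 1) = Some phi2 -> g = f) /\
    (exists f, sys f /\ f (Some 1) = Some phibar2 /\
       forall g, sys g -> g (Some 1) = Some phibar2 -> g = f).
Proof.
move=> sys hsys.
have toB : forall f, sys f -> systemB f.
  by case: hsys => -> f //; apply: A_B.
have Fs : forall c, tau (Some c) = Some c -> sys (Ff c).
  by move=> c hc; case: hsys => ->; [apply: FA | apply: A_B; apply: FA].
have val : forall f, sys f ->
    (f None = Some c1 /\ f (Some 1) = Some phibar2) \/
    (f None = Some c2 /\ f (Some 1) = Some phi2).
  move=> f hf; have hB := toB f hf; rewrite (B_one hB).
  by case: (B_inf hB) => ->; [left; rewrite L_c1 | right; rewrite L_c2].
have ne : Some phi2 <> Some phibar2.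
  by move=> [] e; move: phi2_neq; rewrite /phi2 /phibar2 e eqxx.
have F1 : forall c, tau (Some c) = Some c -> Ff c (Some 1) = mobL (Some c).
  by move=> c hc; rewrite (B_one (toB _ (Fs c hc))).
split; [|split].
- by move=> f /val [[_ ->]|[_ ->]]; [right | left].
- exists (Ff c2); split; first exact: Fs tau_c2.
  split; first by rewrite F1 ?tau_c2 // L_c2.
  move=> g hg hg1; apply: U; [exact: toB | exact: toB (Fs _ tau_c2) | ].
  by case: (val g hg) => [[_ e]|[-> _]] //; rewrite e in hg1; case: (ne (esym hg1)).
- exists (Ff c1); split; first exact: Fs tau_c1.
  split; first by rewrite F1 ?tau_c1 // L_c1.
  move=> g hg hg1; apply: U; [exact: toB | exact: toB (Fs _ tau_c1) | ].
  by case: (val g hg) => [[-> _]|[_ e]] //; rewrite e in hg1; case: (ne hg1).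
Qed.
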